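(* Let $K,H\le\mathbb{H}^\times$ be finite with $[K,K]\le H\trianglelefteq K$ and $H\ne\{1\}$, and let $n\ge3$. Then the poset $\mathcal{P}(G_n(K,H))$ of parabolic subgroups of $G_n(K,H)$ (ordered by inclusion), and hence the intersection lattice $L(\mathcal{A}(G_n(K,H)))$ (ordered by reverse inclusion), is isomorphic to the Dowling lattice $\mathcal{D}_n(K)$.
   Context: $\mathbb{H}$: quaternions. $A_n(K,H)$: diagonal matrices $\mathrm{diag}(k_1,\dots,k_n)$, $k_i\in K$, $k_1\cdots k_n\in H$; $G_n(K,H)$: group generated by $A_n(K,H)$ and permutation matrices, acting on $\mathbb{H}^n$ by left multiplication; it is a quaternionic reflection group (generated by finite-order $g$ with $\mathrm{rk}(1-g)=1$), $\mathcal{A}(G)$ is the set of fixed hyperplanes of its reflections, and $L(\mathcal{A})$ the set of intersections of subsets of $\mathcal{A}$. A parabolic subgroup is the pointwise stabilizer of a subset of $\mathbb{H}^n$. Dowling lattice $\mathcal{D}_n(K)$: its elements are partial $K$-partitions of $\{1,\dots,n\}$, i.e. sets $\{(B_1,[\xi_1]),\dots,(B_d,[\xi_d])\}$ where $B_1,\dots,B_d$ are pairwise disjoint nonempty subsets of $\{1,\dots,n\}$ (not necessarily covering it) and $[\xi_j]$ is the class of a function $\xi_j:B_j\to K$ modulo $\xi_j\sim g\xi_j$ ($g\in K$ constant, left multiplication). The order is: $\pi\le\pi'$ iff every block $(B',[\xi'])$ of $\pi'$ satisfies $B'=B_{i_1}\cup\dots\cup B_{i_p}$ for some blocks $(B_{i_r},[\xi_{i_r}])$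 of $\pi$ with $\xi'|_{B_{i_r}}\in K\cdot\xi_{i_r}$ for each $r$. *)

(* Defs.v *)
From HB Require Import structures.
From mathcomp Require Import all_boot all_order all_algebra.
From mathcomp Require Import fingroup perm.
From mathcomp Require Import classical_sets cardinality reals.
From mathcomp Require Import ring.

Set Implicit Arguments.
Unset Strict Implicit.
Unset Printing Implicit Defensive.

Import Order.TTheory GRing.Theory Num.Theory.
Local Open Scope ring_scope.

Record quat (R : Type) := Quat { qa : R; qb : R; qc : R; qd : R }.

Section Quaternions.
Variable R : fieldType.

Definition quat_to (x : quat R) := (qa x, qb x, qc x, qd x).
Definition quat_of (p : R * R * R * R) := Quat p.1.1.1 p.1.1.2 p.1.2 p.2.
Lemma quat_toK : cancel quat_to quat_of. Proof. by case. Qed.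

HB.instance Definition _ := Equality.copy (quat R) (can_type quat_toK).
HB.instance Definition _ := Choice.copy (quat R) (can_type quat_toK).

Definition qzero : quat R := Quat 0 0 0 0.
Definition qone : quat R := Quat 1 0 0 0.
Definition qopp (x : quat R) := Quat (- qa x) (- qb x) (- qc x) (- qd x).
Definition qadd (x y : quat R) :=
  Quat (qa x + qa y) (qb x + qb y) (qc x + qc y) (qd x + qd y).
Definition qmul (x y : quat R) :=
  Quat (qa x * qa y - qb x * qb y - qc x * qc y - qd x * qd y)
       (qa x * qb y + qb x * qa y + qc x * qd y - qd x * qc y)
       (qa x * qc y - qb x * qd y + qc x * qa y + qd x * qb y)
       (qa x * qd y + qb x * qc y - qc x * qb y + qd x * qa y).

Fact qaddA : associative qadd.
Proof. by move=> [? ? ? ?] [? ? ? ?] [? ? ? ?]; rewrite /qadd /=; congr Quat; ring. Qed.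
Fact qaddC : commutative qadd.
Proof. by move=> [? ? ? ?] [? ? ? ?]; rewrite /qadd /=; congr Quat; ring. Qed.
Fact qadd0 : left_id qzero qadd.
Proof. by move=> [? ? ? ?]; rewrite /qadd /=; congr Quat; ring. Qed.
Fact qaddN : left_inverse qzero qopp qadd.
Proof. by move=> [? ? ? ?]; rewrite /qadd /=; congr Quat; ring. Qed.
Fact qmulA : associative qmul.
Proof. by move=> [? ? ? ?] [? ? ? ?] [? ? ? ?]; rewrite /qmul /=; congr Quat; ring. Qed.
Fact qmul1 : left_id qone qmul.
Proof. by move=> [? ? ? ?]; rewrite /qmul /=; congr Quat; ring. Qed.
Fact qmulr1 : right_id qone qmul.
Proof. by move=> [? ? ? ?]; rewrite /qmul /=; congr Quat; ring. Qed.
Fact qmulDl : left_distributive qmul qadd.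
Proof. by move=> [? ? ? ?] [? ? ? ?] [? ? ? ?]; rewrite /qmul /qadd /=; congr Quat; ring. Qed.
Fact qmulDr : right_distributive qmul qadd.
Proof. by move=> [? ? ? ?] [? ? ? ?] [? ? ? ?]; rewrite /qmul /qadd /=; congr Quat; ring. Qed.
Fact qone_neq0 : qone != qzero.
Proof. by apply/eqP => -[] /eqP; rewrite oner_eq0. Qed.

HB.instance Definition _ := GRing.isNzRing.Build (quat R)
  qaddA qaddC qadd0 qaddN qmulA qmul1 qmulr1 qmulDl qmulDr qone_neq0.

Definition qnorm (x : quat R) := qa x ^+ 2 + qb x ^+ 2 + qc x ^+ 2 + qd x ^+ 2.
Definition qunit : pred (quat R) := fun x => qnorm x != 0.
Definition qinv (x : quat R) :=
  if qnorm x == 0 then x else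
  Quat (qa x / qnorm x) (- qb x / qnorm x) (- qc x / qnorm x) (- qd x / qnorm x).

Lemma qnormM (x y : quat R) : qnorm (x * y) = qnorm x * qnorm y.
Proof. by case: x y => [? ? ? ?] [? ? ? ?]; rewrite /qnorm /= /qmul /=; ring. Qed.

Fact qmulV : {in qunit, left_inverse 1 qinv *%R}.
Proof.
move=> [a b c d]; rewrite /qunit /qnorm /= => h.
change (qmul (qinv (Quat a b c d)) (Quat a b c d) = qone).
rewrite /qinv /qnorm /= (negPf h) /qmul /qone /=.
congr Quat; field; exact: h.
Qed.
Fact qmulrV : {in qunit, right_inverse 1 qinv *%R}.
Proof.
move=> [a b c d]; rewrite /qunit /qnorm /= => h.
change (qmul (Quat a b c d) (qinv (Quat a b c d)) = qone).
rewrite /qinv /qnorm /= (negPf h) /qmul /qone /=.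
congr Quat; field; exact: h.
Qed.
Fact qunitP : forall x y : quat R, y * x = 1 /\ x * y = 1 -> qunit x.
Proof.
move=> x y [yx _]; rewrite /qunit; apply/eqP => h.
have := congr1 qnorm yx; rewrite qnormM h mulr0.
by rewrite /qnorm /GRing.one /= /qone /=; move/eqP; rewrite expr1n !expr0n /= !addr0 eq_sym oner_eq0.
Qed.
Fact qinv_out : {in [predC qunit], qinv =1 id}.
Proof. by move=> x; rewrite inE /qunit /qinv negbK => /eqP ->; rewrite eqxx. Qed.

HB.instance Definition _ := GRing.NzRing_hasMulInverse.Build (quat R)
  qmulV qmulrV qunitP qinv_out.

End Quaternions.

Local Open Scope classical_set_scope.

Definition is_subgroup (T : pzRingType) (X : set T) : Prop :=
  X 1 /\ (forall x y, X x -> X y -> X (x * y)) /\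
  (forall x, X x -> exists2 y, X y & x * y = 1 /\ y * x = 1).

Definition gen_group (T : pzRingType) (S : set T) : set T :=
  [set g | forall X, is_subgroup X -> S `<=` X -> X g].

Definition normal_subgroup (T : unitRingType) (H K : set T) : Prop :=
  is_subgroup H /\ H `<=` K /\
  (forall k h, K k -> H h -> H (k * h * k^-1)).

Definition commutator_subgroup (T : unitRingType) (K : set T) : set T :=
  gen_group [set k1^-1 * k2^-1 * k1 * k2 | k1 in K & k2 in K].

Section Reflection.
Variables (R : fieldType) (n : nat).
Local Notation qmx := ('M[quat R]_n).
Local Notation qvec := ('cV[quat R]_n).

Definition A_n (K H : set (quat R)) : set qmx :=
  [set D | exists d : 'rV[quat R]_n,
     D = diag_mx d /\ (forall i, K (d 0 i)) /\ H (\prod_(i < n) d 0 i)].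

Definition perm_matrices : set qmx := [set P | exists s : 'S_n, P = perm_mx s].

Definition G_n (K H : set (quat R)) : set qmx :=
  gen_group (A_n K H `|` perm_matrices).

Definition pstab (G : set qmx) (X : set qvec) : set qmx :=
  [set g | G g /\ forall x, X x -> g *m x = x].

Definition is_parabolic (G : set qmx) (P : set qmx) : Prop :=
  exists X : set qvec, P = pstab G X.

Definition parabolic (G : set qmx) := {P : set qmx | is_parabolic G P}.

Definition parabolic_le (G : set qmx) (P Q : parabolic G) : Prop :=
  sval P `<=` sval Q.

Definition rscale (u : qvec) (l : quat R) : qvec := map_mx (fun a => a * l) u.

Definition rank_one (A : qmx) : Prop :=
  exists u : qvec, u <> 0 /\
    range (fun v : qvec => A *m v) = [set rscale u l | l in [set: quat R]].

Definition is_reflection (G : set qmx) (g : qmx) : Prop :=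
  G g /\ (exists m, (0 < m)%N /\ g ^+ m = 1) /\ rank_one (1 - g).

Definition fixspace (g : qmx) : set qvec := [set v | g *m v = v].

Definition arrangement (G : set qmx) : set (set qvec) :=
  [set Y | exists2 r, is_reflection G r & Y = fixspace r].

Definition is_flat (G : set qmx) (X : set qvec) : Prop :=
  exists2 S, S `<=` arrangement G & X = \bigcap_(Y in S) Y.

Definition flat (G : set qmx) := {X : set qvec | is_flat G X}.

Definition flat_le (G : set qmx) (X Y : flat G) : Prop := sval Y `<=` sval X.

(* A block (B,[xi]) is encoded as the pair (B, C) where C is the set of *)
(* all functions eta : 'I_n -> H whose restriction to B lies in K.xi,   *)
(* i.e. C determines exactly the class [xi|_B].                         *)

Definition dclass (K : set (quat R)) (B : {set 'I_n}) (xi : 'I_n -> quat R)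
  : set ('I_n -> quat R) :=
  [set eta | exists2 g, K g & forall i, i \in B -> eta i = g * xi i].

Definition dblock := ({set 'I_n} * set ('I_n -> quat R))%type.

Definition is_dblock (K : set (quat R)) (b : dblock) : Prop :=
  b.1 != finset.set0 /\
  exists xi : 'I_n -> quat R, (forall i, i \in b.1 -> K (xi i)) /\
                              b.2 = dclass K b.1 xi.

Definition is_partial_K_partition (K : set (quat R)) (pi : set dblock) : Prop :=
  (forall b, pi b -> is_dblock K b) /\
  (forall b b', pi b -> pi b' -> b <> b' -> forall i, i \in b.1 -> i \notin b'.1).

Definition dowling (K : set (quat R)) := {p : set dblock | is_partial_K_partition K p}.

Definition dowling_le (K : set (quat R)) (p p' : dowling K) : Prop :=
  forall b', sval p' b' ->
    exists S : set dblock, S `<=` sval p /\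
      (forall i, i \in b'.1 <-> exists2 b, S b & i \in b.1) /\
      (forall b, S b -> forall xi', b'.2 xi' -> b.2 xi').

End Reflection.

Definition order_iso (A B : Type) (leA : A -> A -> Prop) (leB : B -> B -> Prop) :=
  exists f : A -> B, bijective f /\ forall x y, leA x y <-> leB (f x) (f y).

(* Main.v *)
Require Import Defs.
From HB Require Import structures.
From mathcomp Require Import all_boot all_order all_algebra.
From mathcomp Require Import fingroup perm.
From mathcomp Require Import boolp classical_sets cardinality reals.
From mathcomp Require Import ring lra zify.
Set Implicit Arguments.
Unset Strict Implicit.
Unset Printing Implicit Defensive.
Import Order.TTheory GRing.Theory Num.Theory.
Local Open Scope ring_scope.
Local Open Scope classical_set_scope.
Lemma qnorm_eq0 (R : realType) (x : quat R) : qnorm x = 0 -> x = 0.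
Proof.
case: x => a b c d; rewrite /qnorm /= => /eqP.
rewrite !paddr_eq0 ?addr_ge0 ?sqr_ge0 // !sqrf_eq0.
by move=> /andP[/andP[/andP[/eqP-> /eqP->] /eqP->] /eqP->].
Qed.

Lemma qunit_nz (R : realType) (x : quat R) : x != 0 -> x \is a GRing.unit.
Proof. by move=> nx; apply/negP => /eqP /qnorm_eq0 /eqP; rewrite (negPf nx). Qed.

Section Main.
Variables (R : realType) (n : nat) (K : set (quat R)).
Hypothesis Ksub : is_subgroup K.
Local Notation qvec := ('cV[quat R]_n).
Local Notation dblock := (@dblock R n).

Lemma K1 : K 1. Proof. by case: Ksub. Qed.
Lemma KM x y : K x -> K y -> K (x * y). Proof. by case: Ksub => _ [h _]; apply: h. Qed.
Lemma Kunit x : K x -> x \is a GRing.unit.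
Proof. by case: Ksub => _ [_ h] /h [y _ [xy yx]]; apply/unitrP; exists y. Qed.
Lemma KV x : K x -> K x^-1.
Proof.
move=> Kx; case: Ksub => _ [_ h]; have [y Ky [xy yx]] := h _ Kx.
suff -> : x^-1 = y by [].
by rewrite -[y]mul1r -(mulVr (Kunit Kx)) -mulrA xy mulr1.
Qed.
Lemma Knz x : K x -> x != 0.
Proof. by move/Kunit; apply: contraTneq => ->; rewrite unitr0. Qed.

Lemma dclassK (B : {set 'I_n}) (xi eta : 'I_n -> quat R) : (forall i, i \in B -> K (xi i)) -> dclass K B xi eta ->
  forall i, i \in B -> K (eta i).
Proof. by move=> Kxi [g Kg e] i iB; rewrite e //; apply: KM => //; apply: Kxi. Qed.

Lemma dclass_rel (B : {set 'I_n}) (xi eta : 'I_n -> quat R) : dclass K B xi eta -> forall i j a b, i \in B -> j \in B ->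
  (eta i * a = eta j * b <-> xi i * a = xi j * b).
Proof.
move=> [g Kg e] i j a b iB jB; rewrite !e // -!mulrA; split; last by move=> ->.
exact: (mulrI (Kunit Kg)).
Qed.

Lemma dclass_self (B : {set 'I_n}) (xi : 'I_n -> quat R) : dclass K B xi xi.
Proof. by exists 1; [exact: K1 | move=> i _; rewrite mul1r]. Qed.

Definition Fset (p : set dblock) : set qvec :=
  [set v | (forall i, (forall b, p b -> i \notin b.1) -> v i 0 = 0) /\
    (forall b, p b -> forall eta, b.2 eta -> forall i j, i \in b.1 -> j \in b.1 ->
       eta i * v i 0 = eta j * v j 0)].

Section Closure.
Variable X : set qvec.

Definition nz i := exists2 x, X x & x i 0 != 0.
Definition krel i j k := K k /\ forall x, X x -> x i 0 = k * x j 0.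
Definition rel i j := exists k, krel i j k.
Definition blk r : {set 'I_n} := [set i | `[< nz i /\ rel r i >]].
Definition xi r i := xget 1 (krel r i).
Definition block r : dblock := (blk r, dclass K (blk r) (xi r)).
Definition piX : set dblock := [set b | exists2 r, nz r & b = block r].

Lemma krel_uniq i j a b : nz j -> krel i j a -> krel i j b -> a = b.
Proof.
move=> [x Xx xj] [_ ha] [_ hb]; apply: (mulIr (qunit_nz xj)).
by rewrite -ha // -hb.
Qed.

Lemma xiP r i k : nz i -> krel r i k -> xi r i = k.
Proof. by move=> ni kr; apply: xget_unique => // y /krel_uniq; apply. Qed.

Lemma xiK r i : rel r i -> krel r i (xi r i).
Proof. by move=> [k kr]; apply: xgetI kr. Qed.

Lemma in_blk r i : (i \in blk r) <-> nz i /\ rel r i.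
Proof. by rewrite inE; split => /asboolP. Qed.

Lemma rel_refl i : rel i i.
Proof. by exists 1; split; [exact: K1 | move=> x _; rewrite mul1r]. Qed.

Lemma rel_sym i j : rel i j -> rel j i.
Proof.
move=> [k [Kk h]]; exists k^-1; split; first exact: KV.
by move=> x Xx; rewrite h // mulKr // Kunit.
Qed.

Lemma rel_trans i j l : rel i j -> rel j l -> rel i l.
Proof.
move=> [k [Kk h]] [k' [Kk' h']]; exists (k * k'); split; first exact: KM.
by move=> x Xx; rewrite h // h' // mulrA.
Qed.

Lemma nz_rel i j : nz i -> rel i j -> nz j.
Proof.
move=> [x Xx xi0] [k [_ h]]; exists x => //; apply: contra xi0.
by rewrite h // => /eqP ->; rewrite mulr0.
Qed.

Lemma blk_self r : nz r -> r \in blk r.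
Proof. by move=> nr; apply/in_blk; split => //; exact: rel_refl. Qed.

Lemma blk_nz r i : i \in blk r -> nz i.
Proof. by case/in_blk. Qed.

Lemma blk_eq r r' i : i \in blk r -> i \in blk r' -> block r = block r'.
Proof.
move=> /in_blk [ni ri] /in_blk [_ r'i].
have rr' : rel r r' by apply: rel_trans ri (rel_sym r'i).
have eB : blk r = blk r'.
  apply/setP => j; apply/idP/idP => /in_blk [nj hj]; apply/in_blk; split => //.
    exact: rel_trans (rel_sym rr') hj.
  exact: rel_trans rr' hj.
rewrite /block -eB; congr pair.
have [k [Kk hk]] := rr'.
have exi : forall j, j \in blk r -> xi r j = k * xi r' j.
  move=> j /in_blk [nj rj]; apply: xiP => //; split.
    apply: KM => //; have := xiK (rel_trans (rel_sym rr') rj) ; by case.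
  move=> x Xx; rewrite hk // -mulrA; congr (_ * _).
  by have [_ ->] := xiK (rel_trans (rel_sym rr') rj).
apply/seteqP; split => eta [g Kg e].
  by exists (g * k); [exact: KM | move=> j jB; rewrite e // exi // mulrA].
exists (g * k^-1); first by apply: KM => //; exact: KV.
move=> j jB; rewrite e // exi // !mulrA mulrVK //; exact: Kunit.
Qed.


Lemma piX_valid : is_partial_K_partition K piX.
Proof.
split.
  move=> b [r nr ->]; split; first by apply/set0Pn; exists r; exact: blk_self.
  exists (xi r); split => // i /in_blk [_ ri]; by case: (xiK ri).
move=> b b' [r nr ->] [r' nr' ->] neq i ir; apply/negP => ir'.
by apply: neq; exact: blk_eq ir ir'.
Qed.

Lemma X_sub_F : X `<=` Fset piX.
Proof.
move=> x Xx; split.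
  move=> i hi; case: (eqVneq (x i 0) 0) => // xi0.
  have ni : nz i by exists x.
  by have := hi _ (ex_intro2 _ _ i ni erefl); rewrite blk_self.
move=> b [r nr ->] eta heta i j ib jb /=.
apply/(dclass_rel heta) => //.
have [_ hi] := xiK (proj2 (proj1 (in_blk r i) ib)).
have [_ hj] := xiK (proj2 (proj1 (in_blk r j) jb)).
by rewrite -hi // -hj.
Qed.

Lemma KL i j k : K k -> (forall x, X x -> x i 0 = k * x j 0) ->
  forall v, Fset piX v -> v i 0 = k * v j 0.
Proof.
move=> Kk hx v [vz vb].
have [nj|nnj] := pselect (nz j).
  have ni : nz i.
    case: nj => x Xx xj; exists x => //; rewrite hx //.
    by apply: contra xj => /eqP/(congr1 (fun y => k^-1 * y)); rewrite mulKr ?Kunit // mulr0 => ->.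
  have kji : krel j i k^-1.
    split; first exact: KV.
    by move=> x Xx; rewrite hx // mulKr // Kunit.
  have ib : i \in blk j by apply/in_blk; split => //; exists k^-1.
  have jb : j \in blk j by exact: blk_self.
  have := vb _ (ex_intro2 _ _ j nj erefl) _ (dclass_self _ _) i j ib jb.
  rewrite (xiP ni kji) (@xiP j j 1 nj); last first.
    by split; [exact: K1 | move=> x _; rewrite mul1r].
  by rewrite mul1r => <-; rewrite mulVKr // Kunit.
have nni : ~ nz i.
  by move=> ni; apply: nnj; apply: nz_rel ni _; exists k; split.
have z l : ~ nz l -> v l 0 = 0.
  by move=> nl; apply: vz => b [r _ ->]; apply/negP => /blk_nz.
by rewrite z // z // mulr0.
Qed.
End Closure.

Definition dle (p p' : set dblock) : Prop :=
  forall b', p' b' ->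
    exists S : set dblock, S `<=` p /\
      (forall i, i \in b'.1 <-> exists2 b, S b & i \in b.1) /\
      (forall b, S b -> forall xi', b'.2 xi' -> b.2 xi').

Definition valid (p : set dblock) := is_partial_K_partition K p.

Lemma same_block p b c i : valid p -> p b -> p c -> i \in b.1 -> i \in c.1 -> b = c.
Proof.
move=> [_ disj] pb pc ib ic; case: (pselect (b = c)) => // neq.
by have := disj b c pb pc neq i ib; rewrite ic.
Qed.

Lemma block_xi p b : valid p -> p b ->
  exists xi0 : 'I_n -> quat R, (forall i, i \in b.1 -> K (xi0 i)) /\ b.2 = dclass K b.1 xi0.
Proof. by move=> [h _] /h [_ [xi0 [h1 h2]]]; exists xi0. Qed.

Lemma sub_block p p' b b' i : valid p -> valid p' -> dle p p' -> p b -> p' b' ->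
  i \in b.1 -> i \in b'.1 ->
  {subset b.1 <= b'.1} /\ (forall x, b'.2 x -> b.2 x).
Proof.
move=> vp vp' le pb pb' ib ib'.
have [S [Sp [cov comp]]] := le _ pb'.
have [c Sc ic] := (proj1 (cov i)) ib'.
have ecb : c = b by apply: (same_block vp (Sp _ Sc) pb ic ib).
subst c; split; last exact: comp.
by move=> j jb; apply/(cov j); exists b.
Qed.

Lemma F_mono p p' : valid p -> valid p' -> dle p p' -> Fset p' `<=` Fset p.
Proof.
move=> vp vp' le v [vz' vb']; split.
  move=> i hi; apply: vz' => b' pb'; apply/negP => ib'.
  have [S [Sp [cov _]]] := le _ pb'.
  have [c Sc ic] := (proj1 (cov i)) ib'.
  by have := hi _ (Sp _ Sc); rewrite ic.
move=> b pb eta heta i j ib jb.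
have [xb [Kxb eb]] := block_xi vp pb.
rewrite eb in heta.
case: (pselect (exists2 b', p' b' & i \in b'.1)) => [[b' pb' ib']|nex].
  have [sb comp] := sub_block vp vp' le pb pb' ib ib'.
  have [x' [Kx' eb']] := block_xi vp' pb'.
  have x'in : b'.2 x' by rewrite eb'; exact: dclass_self.
  have := vb' _ pb' _ x'in i j ib' (sb _ jb).
  have := comp _ x'in; rewrite eb => hx'.
  by move/(dclass_rel hx' _ _ ib jb)/(dclass_rel heta _ _ ib jb).
have vi : v i 0 = 0.
  by apply: vz' => b' pb'; apply/negP => ib'; apply: nex; exists b'.
have vj : v j 0 = 0.
  apply: vz' => b' pb'; apply/negP => jb'; apply: nex; exists b' => //.
  by have [sb _] := sub_block vp vp' le pb pb' jb jb'; exact: sb.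
by rewrite vi vj !mulr0.
Qed.

Lemma F_le p p' : valid p -> valid p' -> Fset p' `<=` Fset p -> dle p p'.
Proof.
move=> vp vp' sub b' pb'.
have [x' [Kx' eb']] := block_xi vp' pb'.
pose w : qvec := \col_m (if m \in b'.1 then (x' m)^-1 else 0).
have wE m : w m 0 = if m \in b'.1 then (x' m)^-1 else 0 by rewrite mxE.
have wnz m : (w m 0 != 0) = (m \in b'.1).
  rewrite wE; case: ifP => mb; last by rewrite eqxx.
  by rewrite invr_eq0 (Knz (Kx' _ mb)).
have wF' : Fset p' w.
  split.
    by move=> i hi; rewrite wE; have := hi _ pb'; case: ifP.
  move=> c pc eta heta i j ic jc.
  case: (pselect (c = b')) => [ecb|neq].
    subst c; rewrite eb' in heta; apply/(dclass_rel heta _ _ ic jc).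
    by rewrite !wE ic jc !mulrV ?(Kunit (Kx' _ ic)) ?(Kunit (Kx' _ jc)).
  have [_ disj] := vp'.
  have nib := disj _ _ pc pb' neq i ic; have njb := disj _ _ pc pb' neq j jc.
  by rewrite !wE (negPf nib) (negPf njb) !mulr0.
have [wz wb] := sub _ wF'.
have prop b j i : p b -> i \in b.1 -> j \in b.1 -> j \in b'.1 -> i \in b'.1.
  move=> pb ib jb; rewrite -!wnz => wj.
  have [xb [Kxb eb]] := block_xi vp pb.
  have xbin : b.2 xb by rewrite eb; exact: dclass_self.
  have e := wb _ pb _ xbin j i jb ib.
  apply: contra wj => /eqP wi0; apply/eqP.
  move: e; rewrite wi0 mulr0 => /(congr1 (fun y => (xb j)^-1 * y)).
  by rewrite mulKr ?(Kunit (Kxb _ jb)) // mulr0.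
exists [set b | p b /\ exists2 i, i \in b.1 & i \in b'.1]; split; first by move=> b [].
split.
  move=> i; split => [ib'|[b [pb [j jb jb']] ib]]; last first.
    exact: (prop b j i pb ib jb jb').
  case: (pselect (exists2 b, p b & i \in b.1)) => [[b pb ib]|nex].
    by exists b => //; split => //; exists i.
  have := wz i (fun b pb => introN idP (fun ib => nex (ex_intro2 _ _ b pb ib))).
  by move=> wi; move: ib'; rewrite -wnz wi eqxx.
move=> b [pb [j jb jb']] x'' hx''.
have [xb [Kxb eb]] := block_xi vp pb.
have xbin : b.2 xb by rewrite eb; exact: dclass_self.
rewrite eb; rewrite eb' in hx''; case: hx'' => g Kg eg.
have Kxj := Kx' _ jb'; have Kbj := Kxb _ jb.
exists (g * (xb j * (x' j)^-1)^-1).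
  by apply: KM => //; apply: KV; apply: KM => //; exact: KV.
move=> i ib; have ib' := prop b j i pb ib jb jb'.
have Kxi := Kx' _ ib'; have Kbi := Kxb _ ib.
have -> : xb j * (x' j)^-1 = xb i * (x' i)^-1.
  by have := wb _ pb _ xbin j i jb ib; rewrite !wE jb' ib'.
by rewrite eg // invrM ?unitrV ?Kunit // invrK -!mulrA mulVr ?Kunit // mulr1.
Qed.

Lemma dle_sub p p' : valid p -> valid p' -> dle p p' -> dle p' p -> p' `<=` p.
Proof.
move=> vp vp' le le' b' pb'.
have [h _] := vp'; have [ne _] := h _ pb'.
have [i ib'] := set0Pn _ ne.
have [S [Sp [cov _]]] := le _ pb'.
have [b Sb ib] := (proj1 (cov i)) ib'; have pb := Sp _ Sb.
have [sb1 cb1] := sub_block vp vp' le pb pb' ib ib'.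
have [sb2 cb2] := sub_block vp' vp le' pb' pb ib' ib.
suff -> : b' = b by [].
case: b' b {ne Sb cov h} pb pb' ib ib' sb1 cb1 sb2 cb2 => [B1 C1] [B2 C2] /= *.
congr pair.
  by apply/setP => j; apply/idP/idP => ?; auto.
by apply/seteqP; split => x; auto.
Qed.

Lemma dle_antisym p p' : valid p -> valid p' -> dle p p' -> dle p' p -> p = p'.
Proof.
move=> vp vp' le le'; apply/seteqP; split; last exact: dle_sub.
exact: (dle_sub vp' vp le' le).
Qed.

Section Refl.
Variable H : set (quat R).
Hypothesis HK : H `<=` K.
Hypothesis Hsub : is_subgroup H.
Variable h : quat R.
Hypotheses (Hh : H h) (h1 : h != 1) (hord : exists m, (0 < m)%N /\ h ^+ m = 1).
Local Notation G := (@G_n R n K H).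

Lemma mx_ext (A B : 'M[quat R]_n) : (forall v : qvec, A *m v = B *m v) -> A = B.
Proof.
move=> e; apply/matrixP => i j.
have := e (delta_mx j 0); rewrite -!colE => /matrixP /(_ i 0).
by rewrite !mxE.
Qed.

Lemma fixP g (v : qvec) : fixspace g v <-> forall m, (g *m v) m 0 = v m 0.
Proof.
split => [e m|e]; first by rewrite /fixspace /= in e; rewrite e.
by apply/matrixP => i j; rewrite (ord1 j) e.
Qed.

Definition mono (g : 'M[quat R]_n) :=
  forall i, exists j k, K k /\ forall v : qvec, (g *m v) i 0 = k * v j 0.

Definition Mon : set 'M[quat R]_n :=
  [set g | mono g /\ exists2 g', mono g' & g * g' = 1 /\ g' * g = 1].

Lemma mono1 : mono 1.
Proof. by move=> i; exists i, 1; split; [exact: K1 | move=> v; rewrite mul1mx mul1r]. Qed.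

Lemma monoM g g' : mono g -> mono g' -> mono (g * g').
Proof.
move=> mg mg' i; have [j [k [Kk ek]]] := mg i; have [l [k' [Kk' ek']]] := mg' j.
exists l, (k * k'); split; first exact: KM.
by move=> v; rewrite -mulmxE -mulmxA ek ek' mulrA.
Qed.

Lemma mono_diag (d : 'rV[quat R]_n) : (forall i, K (d 0 i)) -> mono (diag_mx d).
Proof. by move=> Kd i; exists i, (d 0 i); split => // v; rewrite mul_diag_mx mxE. Qed.

Lemma mono_perm (s : 'S_n) : mono (perm_mx s).
Proof.
by move=> i; exists (s i), 1; split; [exact: K1|move=> v; rewrite -row_permE mxE mul1r].
Qed.

Lemma Mon_subgroup : is_subgroup Mon.
Proof.
split; first by split; [exact: mono1 | exists 1; [exact: mono1 | rewrite mulr1]].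
split.
  move=> x y [mx [x' mx' [xx' x'x]]] [my [y' my' [yy' y'y]]]; split; first exact: monoM.
  exists (y' * x'); first exact: monoM.
  split; first by rewrite mulrA -(mulrA x) yy' mulr1.
  by rewrite mulrA -(mulrA y') x'x mulr1.
move=> x [mx [x' mx' [xx' x'x]]]; exists x' => //; split => //; exists x => //.
Qed.

Lemma G_Mon : G `<=` Mon.
Proof.
move=> g Gg; apply: Gg; first exact: Mon_subgroup.
move=> x [[d [-> [Kd _]]]|[s ->]].
  split; first exact: mono_diag.
  exists (diag_mx (\row_i (d 0 i)^-1)).
    by apply: mono_diag => i; rewrite mxE; apply: KV.
  have -> : (1 : 'M[quat R]_n) = diag_mx (const_mx 1) by rewrite diag_const_mx.
  rewrite -!mulmxE !mulmx_diag.
  by split; congr diag_mx; apply/rowP => i; rewrite !mxE ?mulrV ?mulVr ?Kunit.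
split; first exact: mono_perm.
exists (perm_mx s^-1); first exact: mono_perm.
by rewrite -!mulmxE -!perm_mxM mulgV mulVg perm_mx1.
Qed.

Lemma G_fix (X : set qvec) g : G g -> X `<=` fixspace g ->
  Fset (piX X) `<=` fixspace g.
Proof.
move=> /G_Mon [mg _] sX v Fv; apply/fixP => i.
have [j [k [Kk ek]]] := mg i.
rewrite ek; apply/esym; apply: (KL Kk _ Fv) => x Xx.
by have /fixP/(_ i) := sX _ Xx; rewrite ek => ->.
Qed.

Definition ri (i : 'I_n) : 'M[quat R]_n := diag_mx (\row_m (if m == i then h else 1)).
Definition sw (i j : 'I_n) (a : quat R) : 'M[quat R]_n :=
  perm_mx (tperm i j) *m diag_mx (\row_m (if m == i then a^-1 else if m == j then a else 1)).

Lemma riE i (v : qvec) m : (ri i *m v) m 0 = if m == i then h * v i 0 else v m 0.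
Proof. by rewrite mul_diag_mx !mxE; case: eqP => [->|]; rewrite ?mul1r. Qed.

Lemma swE i j a (v : qvec) m : i != j ->
  (sw i j a *m v) m 0 =
    if m == i then a * v j 0 else if m == j then a^-1 * v i 0 else v m 0.
Proof.
move=> ij; rewrite -mulmxA -row_permE mul_diag_mx !mxE.
case: (eqVneq m i) => [->|mi]; first by rewrite tpermL eq_sym (negPf ij) eqxx.
case: (eqVneq m j) => [->|mj]; first by rewrite tpermR eqxx.
have -> : tperm i j m = m by apply: tpermD; rewrite eq_sym.
by rewrite (negPf mi) (negPf mj) mul1r.
Qed.

Lemma prod1_nat (lo hi : nat) (F : nat -> quat R) :
  (forall m, (lo <= m < hi)%N -> F m = 1) -> \prod_(lo <= m < hi) F m = 1.
Proof.
by move=> hF; rewrite big_nat_cond big1 // => m /andP[/hF ->].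
Qed.

Lemma prod_single (i : nat) (F : nat -> quat R) : (i < n)%N ->
  (forall m, m != i -> F m = 1) -> \prod_(0 <= m < n) F m = F i.
Proof.
move=> ilt hF; rewrite (big_cat_nat (leq0n i) (ltnW ilt)) /= [X in _ * X]big_ltn //.
rewrite !prod1_nat ?mul1r ?mulr1 // => m /andP[a b]; apply: hF;
  apply/eqP => e; rewrite e in a b; lia.
Qed.

Lemma prod_double (i j : nat) (F : nat -> quat R) : (i < j)%N -> (j < n)%N ->
  (forall m, m != i -> m != j -> F m = 1) -> \prod_(0 <= m < n) F m = F i * F j.
Proof.
move=> ij jn hF.
rewrite (big_cat_nat (leq0n i) (ltnW (ltn_trans ij jn))) /= [X in _ * X]big_ltn ?(ltn_trans ij) //.
rewrite (big_cat_nat ij (ltnW jn)) /= [X in _ * (_ * (_ * X))]big_ltn //.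
rewrite !prod1_nat ?mul1r ?mulr1 // => m /andP[a b]; apply: hF;
  apply/eqP => e; rewrite e in a b; lia.
Qed.

Lemma Gmul x y : G x -> G y -> G (x * y).
Proof.
move=> Gx Gy X sgX sX; have [_ [XM _]] := sgX.
by apply: XM; [exact: (Gx X sgX sX) | exact: (Gy X sgX sX)].
Qed.

Lemma ri_G (i : 'I_n) : G (ri i).
Proof.
move=> X _ sX; apply: sX; left; exists (\row_m (if m == i then h else 1)).
split => //; split.
  by move=> m; rewrite mxE; case: ifP => _; [apply: HK | exact: K1].
rewrite (eq_bigr (fun m : 'I_n => (fun k : nat => if k == i then h else 1) m)).
  change (H (\prod_(m < n) (fun k : nat => if k == i then h else 1) m)).
  rewrite -(big_mkord xpredT (fun k : nat => if k == i then h else 1)).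
  by rewrite (prod_single (ltn_ord i)) ?eqxx // => m /negPf ->.
by move=> m _; rewrite mxE.
Qed.

Lemma oneBE (g : 'M[quat R]_n) (v : qvec) m : ((1 - g) *m v) m 0 = v m 0 - (g *m v) m 0.
Proof. by rewrite mulmxBl mul1mx; set w := g *m v; rewrite !mxE. Qed.

Lemma H1 : H 1. Proof. by case: Hsub. Qed.

Lemma sw_G (i j : 'I_n) a : K a -> i != j -> G (sw i j a).
Proof.
move=> Ka ij; rewrite /sw mulmxE; apply: Gmul.
  by move=> X _ sX; apply: sX; right; exists (tperm i j).
move=> X _ sX; apply: sX; left.
exists (\row_m (if m == i then a^-1 else if m == j then a else 1)); split => //; split.
  by move=> m; rewrite mxE; case: ifP => _; [exact: KV | case: ifP => _ //; exact: K1].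
rewrite (eq_bigr (fun m : 'I_n => (fun k : nat => if k == i then a^-1 else if k == j then a else 1) m)); last by move=> m _; rewrite mxE.
change (H (\prod_(m < n) (fun k : nat => if k == i then a^-1 else if k == j then a else 1) m)).
rewrite -(big_mkord xpredT (fun k : nat => if k == i then a^-1 else if k == j then a else 1)).
have ji : ((j : nat) == i) = false by apply/negbTE; rewrite eq_sym; exact: ij.
have hF (m : nat) : m != i -> m != j ->
  (if m == i then a^-1 else if m == j then a else 1) = 1.
  by move=> mi mj; rewrite (negPf mi) (negPf mj).
case: (ltngtP i j) => [lt|lt|e].
- by rewrite (prod_double lt (ltn_ord j) hF) /= eqxx ji eqxx mulVr ?Kunit //; exact: H1.
- rewrite (prod_double lt (ltn_ord i)) /=; last by move=> m a1 a2; apply: hF.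
  by rewrite eqxx ji eqxx mulrV ?Kunit //; exact: H1.
- by move: ij; rewrite (ord_inj e) eqxx.
Qed.

Lemma qunit1B : 1 - h \is a GRing.unit.
Proof. by apply: qunit_nz; rewrite subr_eq0 eq_sym. Qed.

Lemma riX (i : 'I_n) k :
  (ri i) ^+ k = diag_mx (\row_m (if m == i then h ^+ k else 1)).
Proof.
elim: k => [|k IH].
  rewrite expr0; have -> : (1 : 'M[quat R]_n) = diag_mx (const_mx 1) by rewrite diag_const_mx.
  congr diag_mx; apply/rowP => m.
  by rewrite !mxE expr0; case: ifP.
rewrite exprS IH -mulmxE mulmx_diag; congr diag_mx; apply/rowP => m.
by rewrite !mxE; case: ifP; rewrite ?exprS ?mul1r.
Qed.

Lemma ri_refl (i : 'I_n) : is_reflection G (ri i).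
Proof.
split; first exact: ri_G.
split.
  have [m [m0 hm]] := hord; exists m; split => //.
  rewrite riX; have -> : (1 : 'M[quat R]_n) = diag_mx (const_mx 1) by rewrite diag_const_mx.
  congr diag_mx; apply/rowP => k.
  by rewrite !mxE; case: ifP.
exists (\col_m (if m == i then 1 else 0)); split.
  move/matrixP => /(_ i 0); rewrite !mxE eqxx => /eqP; by rewrite oner_eq0.
apply/seteqP; split.
  move=> _ [v _ <-]; exists ((1 - h) * v i 0) => //.
  apply/matrixP => m j; rewrite (ord1 j) oneBE riE !mxE.
  by case: (eqVneq m i) => [e|_]; rewrite ?e ?mul1r ?mul0r ?mulrBl ?mul1r ?subrr.
move=> _ [l _ <-]; exists (\col_m (if m == i then (1 - h)^-1 * l else 0)) => //.
apply/matrixP => m j; rewrite (ord1 j) oneBE riE !mxE.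
case: eqP => [_|_]; last by rewrite mul0r subrr.
by rewrite eqxx mul1r -{1}(mul1r ((1 - h)^-1 * l)) -mulrBl mulrA mulrV ?mul1r // qunit1B.
Qed.

Lemma sw_refl (i j : 'I_n) a : K a -> i != j -> is_reflection G (sw i j a).
Proof.
move=> Ka ij; have Ua := Kunit Ka.
have ji : (j == i) = false by apply/negbTE; rewrite eq_sym.
split; first exact: sw_G.
split.
  exists 2%N; split => //; apply: mx_ext => v.
  rewrite expr2 -mulmxE -mulmxA mul1mx; apply/matrixP => m k; rewrite (ord1 k).
  rewrite !swE //; case: (eqVneq m i) => [e|mi]; first by rewrite ?e ji eqxx mulrA mulrV ?mul1r.
  by case: (eqVneq m j) => [e|mj]; rewrite ?e ?eqxx ?mulrA ?mulVr ?mul1r.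
exists (\col_m (if m == i then 1 else if m == j then - a^-1 else 0)); split.
  move/matrixP => /(_ i 0); rewrite !mxE eqxx => /eqP; by rewrite oner_eq0.
apply/seteqP; split.
  move=> _ [v _ <-]; exists (v i 0 - a * v j 0) => //.
  apply/matrixP => m k; rewrite (ord1 k) oneBE swE // !mxE.
  case: (eqVneq m i) => [e|mi]; first by rewrite ?e mul1r.
  case: (eqVneq m j) => [e|mj]; last by rewrite subrr mul0r.
  by rewrite ?e mulNr mulrBr mulrA mulVr // mul1r opprB.
move=> _ [l _ <-]; exists (\col_m (if m == i then l else 0)) => //.
apply/matrixP => m k; rewrite (ord1 k) oneBE swE // !mxE ji eqxx.
case: (eqVneq m i) => [e|mi]; first by rewrite ?e mulr0 subr0 mul1r.
case: (eqVneq m j) => [e|mj]; last by rewrite subrr mul0r.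
by rewrite ?e sub0r mulNr.
Qed.

Lemma U p (v : qvec) : valid p ->
  (forall r, is_reflection G r -> Fset p `<=` fixspace r -> fixspace r v) -> Fset p v.
Proof.
move=> vp hr; split.
  move=> i hi; have : fixspace (ri i) v.
    apply: hr; first exact: ri_refl.
    move=> w [wz _]; apply/fixP => m; rewrite riE.
    by case: eqP => [e|_] //; rewrite e wz // mulr0.
  move/fixP/(_ i); rewrite riE eqxx => e.
  have : (h - 1) * v i 0 = 0 by rewrite mulrBl e mul1r subrr.
  move/(congr1 (fun y => (h - 1)^-1 * y)); rewrite mulKr ?mulr0 //.
  by apply: qunit_nz; rewrite subr_eq0.
move=> b pb eta heta i j ib jb.
case: (eqVneq i j) => [->//|ij].
have [xb [Kxb eb]] := block_xi vp pb.
have Keta : forall m, m \in b.1 -> K (eta m).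
  by apply: (dclassK Kxb); rewrite -eb.
have Ki := Keta i ib; have Kj := Keta j jb.
pose a := (eta i)^-1 * eta j.
have Ka : K a by apply: KM => //; exact: KV.
have : fixspace (sw i j a) v.
  apply: hr; first exact: sw_refl.
  move=> w [_ wb]; have ew := wb _ pb _ heta i j ib jb.
  have wi : a * w j 0 = w i 0 by rewrite /a -mulrA -ew mulKr // Kunit.
  have wj : a^-1 * w i 0 = w j 0 by rewrite -wi mulKr // Kunit.
  apply/fixP => m; rewrite swE //.
  case: eqP => [e|_]; first by rewrite e.
  by case: eqP => [e|_]; first by rewrite e.
move/fixP/(_ i); rewrite swE // eqxx => e.
by rewrite -e /a !mulrA mulrV ?mul1r // Kunit.
Qed.

End Refl.
End Main.

Lemma finite_order (R : realType) (S : set (quat R)) (x : quat R) :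
  is_subgroup S -> finite_set S -> S x -> exists m, (0 < m)%N /\ x ^+ m = 1.
Proof.
move=> [S1 [SM SV]] fS Sx.
have Ux : x \is a GRing.unit by have [y _ [xy yx]] := SV _ Sx; apply/unitrP; exists y.
apply: contrapT => nex.
have key a b : (a < b)%N -> x ^+ a = x ^+ b -> False.
  move=> lt e; apply: nex; exists (b - a)%N; split; first by rewrite subn_gt0.
  rewrite -(subnKC (ltnW lt)) exprD in e.
  by apply: (mulrI (unitrX a Ux)); rewrite mulr1 -e.
have inj : {in [set: nat] &, injective (fun k => x ^+ k)}.
  move=> a b _ _ e; case: (ltngtP a b) => // lt; exfalso.
    exact: key lt e.
  exact: key lt (esym e).
have sub : [set x ^+ k | k in [set: nat]] `<=` S.
  move=> _ [k _ <-]; elim: k => [|k IH]; first by rewrite expr0.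
  by rewrite exprS; apply: SM.
have e := eq_finite_set (inj_card_eq inj).
by apply: infinite_nat; rewrite -e; exact: sub_finite_set sub fS.
Qed.

Lemma iso_of_inv (A B : Type) (leA : A -> A -> Prop) (leB : B -> B -> Prop) (g : B -> A) :
  injective g -> (forall a, exists b, g b = a) ->
  (forall b b', leA (g b) (g b') <-> leB b b') -> order_iso leA leB.
Proof.
move=> ginj gsurj gle.
pose f a := projT1 (cid (gsurj a)).
have gf a : g (f a) = a := projT2 (cid (gsurj a)).
exists f; split.
  by exists g => [a|b]; [exact: gf | apply: ginj; rewrite gf].
move=> x y; split => hxy.
  by apply/gle; rewrite !gf.
by move/gle: hxy; rewrite !gf.
Qed.

Theorem corollary4p6 (R : realType) (K H : set (quat R)) (n : nat) :
  finite_set K -> is_subgroup K ->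
  finite_set H -> normal_subgroup H K ->
  commutator_subgroup K `<=` H ->
  H <> [set 1] ->
  (3 <= n)%N ->
  order_iso (@parabolic_le R n (G_n K H)) (@dowling_le R n K) /\
  order_iso (@flat_le R n (G_n K H)) (@dowling_le R n K).
Proof.
move=> finK Ksub finH [Hsub [HK _]] _ H1n n3.
have [h [Hh h1]] : exists h, H h /\ h != 1.
  apply: contrapT => nex; apply: H1n; apply/seteqP; split => [x Hx|x ->]; last first.
    by case: Hsub.
  by case: (eqVneq x 1) => // ne; exfalso; apply: nex; exists x.
have hord := finite_order Hsub finH Hh.
have UU := U Ksub HK Hsub Hh h1 hord.
have dinj (p p' : @dowling R n K) : dowling_le p p' -> dowling_le p' p -> p = p'.
  case: p p' => [p vp] [p' vp'] /= le le'; apply: eq_exist.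
  exact: (dle_antisym vp vp' le le').
split.
  pose g (p : @dowling R n K) : parabolic (@G_n R n K H) :=
    exist _ (pstab (@G_n R n K H) (Fset (sval p))) (ex_intro _ _ erefl).
  have gle (p p' : @dowling R n K) : parabolic_le (g p) (g p') <-> dowling_le p p'.
    case: p p' => [p vp] [p' vp']; rewrite /parabolic_le /=.
    change (pstab (@G_n R n K H) (Fset p) `<=` pstab (@G_n R n K H) (Fset p') <-> dle p p').
    split => [sub|le].
      apply: (F_le Ksub vp vp') => v Fv; apply: (UU _ _ _ vp) => r rr Fr.
      have : pstab (@G_n R n K H) (Fset p) r by split => [|x Fx]; [case: rr | exact: Fr].
      by move/sub => [_ fx]; exact: fx.
    move=> r [Gr fr]; split => // x Fx; apply: fr; exact: (F_mono Ksub vp vp' le).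
  apply: (iso_of_inv (g := g)) => //.
    by move=> p p' e; apply: dinj; apply/gle; rewrite e.
  move=> [P hP]; have [X eP] := hP.
  exists (exist _ (piX K X) (piX_valid Ksub X)); apply: eq_exist => /=.
  rewrite eP; apply/seteqP; split => r [Gr fr]; split => // x Hx.
    by apply: fr; exact: X_sub_F.
  exact: (G_fix Ksub Gr fr).
have flatF (p : @dowling R n K) : is_flat (@G_n R n K H) (Fset (sval p)).
  case: p => [p vp] /=.
  exists [set Y | arrangement (@G_n R n K H) Y /\ Fset p `<=` Y]; first by move=> Y [].
  apply/seteqP; split; first by move=> v Fv Y [_ sY]; exact: sY.
  move=> v hv; apply: (UU _ _ _ vp) => r rr Fr.
  apply: (hv (fixspace r)); split => //; exists r => //.
pose phi (p : @dowling R n K) : flat (@G_n R n K H) := exist _ (Fset (sval p)) (flatF p).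
have phile (p p' : @dowling R n K) : flat_le (phi p) (phi p') <-> dowling_le p p'.
  case: p p' => [p vp] [p' vp']; rewrite /flat_le /=.
  change (Fset p' `<=` Fset p <-> dle p p').
  by split => [sub|le]; [exact: (F_le Ksub vp vp' sub) | exact: (F_mono Ksub vp vp' le)].
apply: (iso_of_inv (g := phi)) => //.
  by move=> p p' e; apply: dinj; apply/phile; rewrite e.
move=> [Xs hXs]; have [S sS eX] := hXs.
exists (exist _ (piX K Xs) (piX_valid Ksub _)).
apply: eq_exist => /=; apply/seteqP; split; last exact: X_sub_F.
move=> v Fv; rewrite eX => Y SY; have [r rr eY] := sS _ SY; subst Y.
apply: (G_fix Ksub (proj1 rr) _ Fv) => x; rewrite eX => hx; exact: hx _ SY.
Qed.
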